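(* Let $s_y\ge 0$ and $t\ge 1$ be integers, $Y=[0,s_y]$, $a=4s_y+3$, and $I_1=[0,t]\times Y$, $T=[0,(t),at^2-t]\times\{0\}$, $S=[at^2,(t+1),(a+1)t^2-1]\times Y$, $I_2=[2at^2,2at^2+t]\times Y$, $I_3=[(3a+1)t^2,(3a+1)t^2+t]\times Y$, and $A=I_1\cup I_2\cup I_3\cup T\cup S$. Then $|A|=(8s_y+7)t+(3s_y+1)$ and $A+A\supseteq[0,(16s_y+14)t^2-1]\times[0,s_y]$.
   Context: For integers $a\le b$, $[a,b]$ denotes $\{a,\dots,b\}$. For integers $a\le b$ and $t\ge1$ with $t\mid b-a$, $[a,(t),b]=\{a,a+t,a+2t,\dots,b\}$. $A+A=\{(x+x',y+y'):(x,y),(x',y')\in A\}$ (summands may coincide). *)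

(* Defs.v *)
(* All points involved have nonnegative coordinates, so we
   work with nat * nat. *)
From mathcomp Require Import all_boot.
Set Implicit Arguments. Unset Strict Implicit. Unset Printing Implicit Defensive.

Definition intv (a b : nat) : seq nat := iota a (b - a).+1.

(* [a,(t),b] = {a, a+t, ..., b} (for a <= b, t >= 1, t | b - a) *)
Definition aprog (a t b : nat) : seq nat :=
  [seq a + k * t | k <- iota 0 ((b - a) %/ t).+1].

Definition prodl (X Y : seq nat) : seq (nat * nat) :=
  [seq (x, y) | x <- X, y <- Y].

(* The set A of the statement, as a list (possibly with repetitions) *)
Definition setA (sy t : nat) : seq (nat * nat) :=
  let Y := intv 0 sy in
  let a := 4 * sy + 3 in
  let I1 := prodl (intv 0 t) Y in
  let T := prodl (aprog 0 t (a * t ^ 2 - t)) [:: 0] in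
  let S := prodl (aprog (a * t ^ 2) t.+1 ((a + 1) * t ^ 2 - 1)) Y in
  let I2 := prodl (intv (2 * a * t ^ 2) (2 * a * t ^ 2 + t)) Y in
  let I3 := prodl (intv ((3 * a + 1) * t ^ 2) ((3 * a + 1) * t ^ 2 + t)) Y in
  I1 ++ I2 ++ I3 ++ T ++ S.

Definition in_sumset (A : seq (nat * nat)) (p : nat * nat) : Prop :=
  exists q r, q \in A /\ r \in A /\ p = (q.1 + r.1, q.2 + r.2).

(* Main.v *)
Require Import Defs.
From mathcomp Require Import all_boot.
From mathcomp Require Import zify.

Lemma intv_mem c e x : c <= x <= e -> x \in intv c e.
Proof. move=> /andP[h1 h2]; rewrite /intv mem_iota; lia. Qed.

Lemma intv_memP c e x : c <= e -> x \in intv c e -> c <= x <= e.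
Proof. move=> h; rewrite /intv mem_iota; lia. Qed.

Lemma aprog_mem c d e k : 0 < d -> k * d <= e - c -> c + k * d \in aprog c d e.
Proof.
move=> hd hk; rewrite /aprog; apply/mapP; exists k => //; rewrite mem_iota add0n ltnS leq_divRL //.
Qed.

Lemma aprog_memP c d e x : 0 < d -> x \in aprog c d e ->
  exists k, x = c + k * d /\ k * d <= e - c.
Proof.
move=> hd /mapP[k]; rewrite mem_iota add0n ltnS leq_divRL // => /andP[_ hk] ->.
by exists k.
Qed.

Lemma prodl_mem X Y x y : x \in X -> y \in Y -> (x, y) \in prodl X Y.
Proof. move=> hx hy; exact: (allpairs_f pair hx hy). Qed.

Lemma prodl_memP X Y p : p \in prodl X Y -> p.1 \in X /\ p.2 \in Y.
Proof. by move=> /allpairsP[[x y] [hx hy ->]]. Qed.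

Lemma prodl_uniq X Y : uniq X -> uniq Y -> uniq (prodl X Y).
Proof. move=> hx hy; apply: allpairs_uniq => // [[? ?] [? ?]] _ _ /=; by case=> -> ->. Qed.

Lemma aprog_uniq c d e : 0 < d -> uniq (aprog c d e).
Proof.
move=> hd; rewrite /aprog map_inj_in_uniq ?iota_uniq // => k l _ _ /eqP.
by rewrite eqn_add2l eqn_pmul2r // => /eqP.
Qed.

Lemma mult_lt X Y t : X * t < Y * t -> X * t <= Y * t - t.
Proof.
move=> h; have h1 : X < Y by rewrite -(@ltn_pmul2r t) //; case: t h => //; rewrite !muln0.
have : X.+1 * t <= Y * t by rewrite leq_mul2r h1 orbT.
rewrite mulSn; lia.
Qed.

Lemma in_catL (T : eqType) (x : T) s1 s2 : x \in s1 -> x \in s1 ++ s2.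
Proof. by rewrite mem_cat => ->. Qed.
Lemma in_catR (T : eqType) (x : T) s1 s2 : x \in s2 -> x \in s1 ++ s2.
Proof. by rewrite mem_cat => ->; rewrite orbT. Qed.

Definition cI1 sy t := prodl (intv 0 t) (intv 0 sy).
Definition cI2 sy t := prodl (intv (2 * (4 * sy + 3) * t ^ 2) (2 * (4 * sy + 3) * t ^ 2 + t)) (intv 0 sy).
Definition cI3 sy t := prodl (intv ((3 * (4 * sy + 3) + 1) * t ^ 2) ((3 * (4 * sy + 3) + 1) * t ^ 2 + t)) (intv 0 sy).
Definition cT sy t := prodl (aprog 0 t ((4 * sy + 3) * t ^ 2 - t)) [:: 0].
Definition cS sy t := prodl (aprog ((4 * sy + 3) * t ^ 2) t.+1 ((4 * sy + 3 + 1) * t ^ 2 - 1)) (intv 0 sy).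

Lemma setA_split sy t : setA sy t = cI1 sy t ++ cI2 sy t ++ cI3 sy t ++ cT sy t ++ cS sy t.
Proof. by []. Qed.

Section Main.
Variables (sy t : nat).
Hypothesis ht : 1 <= t.

Local Notation a := (4 * sy + 3).

Lemma mI1 r y : r <= t -> y <= sy -> (r, y) \in setA sy t.
Proof.
move=> hr hy; rewrite setA_split; apply: in_catL.
apply: prodl_mem; apply: intv_mem; lia.
Qed.

Lemma mI2 r y : r <= t -> y <= sy -> (2 * a * t ^ 2 + r, y) \in setA sy t.
Proof.
move=> hr hy; rewrite setA_split; apply: in_catR; apply: in_catL.
apply: prodl_mem; apply: intv_mem; lia.
Qed.

Lemma mI3 r y : r <= t -> y <= sy -> ((3 * a + 1) * t ^ 2 + r, y) \in setA sy t.
Proof.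
move=> hr hy; rewrite setA_split; do 2 apply: in_catR; apply: in_catL.
apply: prodl_mem; apply: intv_mem; lia.
Qed.

Lemma mT j : j * t <= a * t ^ 2 - t -> (j * t, 0) \in setA sy t.
Proof.
move=> hj; rewrite setA_split; do 3 apply: in_catR; apply: in_catL.
apply: prodl_mem; last by rewrite inE.
rewrite -[j * t]add0n; apply: aprog_mem => //; lia.
Qed.

Lemma mS k y : k * t.+1 <= (a + 1) * t ^ 2 - 1 - a * t ^ 2 -> y <= sy ->
  (a * t ^ 2 + k * t.+1, y) \in setA sy t.
Proof.
move=> hk hy; rewrite setA_split; do 4 apply: in_catR.
apply: prodl_mem; last by apply: intv_mem; lia.
by apply: aprog_mem.
Qed.

Lemma sumT c m y X : (forall r y, r <= t -> y <= sy -> (c + r, y) \in setA sy t) ->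
  m < a * t ^ 2 -> y <= sy -> X = c + m -> in_sumset (setA sy t) (X, y).
Proof.
move=> hc hm hy ->.
exists (m %/ t * t, 0), (c + m %% t, y); split; [|split].
- apply: mT.
  have e : a * t ^ 2 = (a * t) * t by rewrite -mulnA mulnn.
  rewrite e; apply: mult_lt; rewrite -e.
  exact: leq_ltn_trans (leq_divM m t) _.
- by apply: hc => //; apply: ltnW; apply: ltn_pmod.
- rewrite /= {1}(divn_eq m t); congr pair; lia.
Qed.

Lemma sumS c m y X : (forall r y, r <= t -> y <= sy -> (c + r, y) \in setA sy t) ->
  m <= t ^ 2 - 1 -> y <= sy -> X = a * t ^ 2 + c + m -> in_sumset (setA sy t) (X, y).
Proof.
move=> hc hm hy ->.
exists (a * t ^ 2 + m %/ t.+1 * t.+1, y), (c + m %% t.+1, 0); split; [|split].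
- apply: mS => //; rewrite mulnDl mul1n.
  have := leq_divM m t.+1; lia.
- by apply: hc => //; rewrite -ltnS; apply: ltn_pmod.
- rewrite /= {1}(divn_eq m t.+1); congr pair; lia.
Qed.

Lemma sumC3 y X : y <= sy -> a * t ^ 2 + t ^ 2 <= X -> X < 2 * a * t ^ 2 ->
  in_sumset (setA sy t) (X, y).
Proof.
move=> hy h1 h2.
set m := X - a * t ^ 2.
set q := m %/ t; set r := m %% t.
have hr : r < t by apply: ltn_pmod.
have hmq : m = q * t + r by apply: divn_eq.
have hq : t <= q by rewrite leq_divRL // mulnn; lia.
have hrq : r * t <= q * t by rewrite leq_mul2r; apply/orP; right; lia.
exists (a * t ^ 2 + r * t.+1, y), ((q - r) * t, 0); split; [|split].
- apply: mS => //.
  have : r.+1 * t.+1 <= t * t.+1 by rewrite leq_mul2r hr orbT.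
  rewrite mulSn mulnS -mulnn mulnDl mul1n; lia.
- apply: mT; apply: leq_trans (_ : q * t <= _).
    by rewrite leq_mul2r leq_subr orbT.
  have e : a * t ^ 2 = (a * t) * t by rewrite -mulnA mulnn.
  rewrite e; apply: mult_lt; rewrite -e.
  have : 2 * a * t ^ 2 = 2 * (a * t ^ 2) by rewrite mulnA.
  lia.
- rewrite /= mulnS mulnBl; congr pair; lia.
Qed.

End Main.

Definition cTp sy t := [seq (k * t, 0) | k <- iota 2 ((4 * sy + 3) * t - 2)].

Lemma catU (s1 s2 : seq (nat * nat)) h : uniq s1 -> uniq s2 ->
  {in s1, forall p, p.1 <= h} -> {in s2, forall p, h < p.1} -> uniq (s1 ++ s2).
Proof.
move=> u1 u2 H1 H2; rewrite cat_uniq u1 u2 andbT /=; apply/hasPn => p /H2 hp.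
by apply/negP => /H1; lia.
Qed.

Lemma in_cat_all (s1 s2 : seq (nat * nat)) (P : nat * nat -> Prop) :
  {in s1, forall p, P p} -> {in s2, forall p, P p} -> {in s1 ++ s2, forall p, P p}.
Proof. by move=> h1 h2 p; rewrite mem_cat => /orP[/h1|/h2]. Qed.

Lemma size_intv c e : size (intv c e) = (e - c).+1.
Proof. by rewrite /intv size_iota. Qed.
Lemma size_prodl X Y : size (prodl X Y) = size X * size Y.
Proof. exact: size_allpairs. Qed.
Lemma size_aprog c d e : size (aprog c d e) = ((e - c) %/ d).+1.
Proof. by rewrite /aprog size_map size_iota. Qed.

Section Count.
Variables (sy t : nat).
Hypothesis ht : 1 <= t.
Local Notation a := (4 * sy + 3).
Local Notation A := ((4 * sy + 3) * t ^ 2).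

Lemma eAt : A = (a * t) * t.
Proof. by rewrite -mulnA mulnn. Qed.

Lemma eA1 : (a + 1) * t ^ 2 = A + t ^ 2.
Proof. by rewrite mulnDl mul1n. Qed.

Lemma hA3 : 3 * t ^ 2 <= A.
Proof. by rewrite leq_mul2r; apply/orP; right; lia. Qed.

Lemma hQt : t <= t ^ 2.
Proof. by rewrite -mulnn; apply: leq_pmull. Qed.

Lemma cT_char p : p \in cT sy t -> p \in cI1 sy t \/ p \in cTp sy t.
Proof.
case: p => x y /prodl_memP /= [hx]; rewrite inE => /eqP ->.
have [k [-> hk]] := aprog_memP _ _ _ _ ht hx.
rewrite add0n subn0 in hk *.
case: (leqP k 1) => hk1.
  left; apply: prodl_mem; apply: intv_mem.
    have : k * t <= 1 * t by rewrite leq_mul2r hk1 orbT.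
    lia.
  lia.
right; apply/mapP; exists k => //.
have : k < a * t by rewrite -(ltn_pmul2r ht) -eAt; lia.
rewrite mem_iota; lia.
Qed.

Lemma cTp_sub p : p \in cTp sy t -> p \in cT sy t.
Proof.
move=> /mapP [k]; rewrite mem_iota => hk ->.
apply: prodl_mem; last by rewrite inE.
rewrite -[k * t]add0n; apply: aprog_mem => //.
rewrite subn0 eAt; apply: mult_lt.
by rewrite ltn_pmul2r //; lia.
Qed.

Lemma rI1 : {in cI1 sy t, forall p, p.1 <= t}.
Proof. by move=> p /prodl_memP [/intv_memP h _]; case/andP: (h (leq0n t)). Qed.

Lemma rTp : {in cTp sy t, forall p, 2 * t <= p.1 <= A - t}.
Proof.
move=> p /mapP [k]; rewrite mem_iota => hk -> /=.
apply/andP; split; first by rewrite leq_mul2r; apply/orP; right; lia.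
rewrite eAt; apply: mult_lt; rewrite ltn_pmul2r //; lia.
Qed.

Lemma rS : {in cS sy t, forall p, A <= p.1 <= A + t ^ 2 - 1}.
Proof.
move=> p /prodl_memP [hx _].
have [k [-> hk]] := aprog_memP _ _ _ _ (ltn0Sn t) hx.
move: hk; rewrite eA1; lia.
Qed.

Lemma rI2 : {in cI2 sy t, forall p, 2 * A <= p.1 <= 2 * A + t}.
Proof.
move=> p /prodl_memP [/intv_memP h _]; rewrite mulnA; apply: h; lia.
Qed.

Lemma rI3 : {in cI3 sy t, forall p, 3 * A + t ^ 2 <= p.1}.
Proof.
move=> p /prodl_memP [/intv_memP h _].
have e : (3 * (4 * sy + 3) + 1) * t ^ 2 = 3 * A + t ^ 2 by rewrite mulnDl mul1n mulnA.
rewrite e in h; by case/andP: (h (leq_addr _ _)).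
Qed.

Lemma uniqL : uniq (cI1 sy t ++ cTp sy t ++ cS sy t ++ cI2 sy t ++ cI3 sy t).
Proof.
have hA := hA3; have hQ := hQt.
have u1 : uniq (cI1 sy t) by apply: prodl_uniq; apply: iota_uniq.
have u2 : uniq (cI2 sy t) by apply: prodl_uniq; apply: iota_uniq.
have u3 : uniq (cI3 sy t) by apply: prodl_uniq; apply: iota_uniq.
have uS : uniq (cS sy t) by apply: prodl_uniq; [apply: aprog_uniq|apply: iota_uniq].
have uT : uniq (cTp sy t).
  rewrite map_inj_uniq ?iota_uniq // => k l [] /eqP.
  by rewrite eqn_pmul2r // => /eqP.
apply: (@catU _ _ (t)) => //.
- apply: (@catU _ _ (A - t)) => //.
  + apply: (@catU _ _ (A + t ^ 2 - 1)) => //.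
    * apply: (@catU _ _ (2 * A + t)) => //; first by move=> p /rI2 /andP[? ?].
      by move=> p /rI3; lia.
    * by move=> p /rS/andP[? ?]; lia.
    * by apply: in_cat_all => p; [move/rI2/andP => [? ?]|move/rI3]; lia.
  + by move=> p /rTp/andP[? ?]; lia.
  + apply: in_cat_all => p; first by move/rS/andP => [? ?]; lia.
    by move: p; apply: in_cat_all => p; [move/rI2/andP => [? ?]|move/rI3]; lia.
- by move=> p /rI1.
- apply: in_cat_all => p; first by move/rTp/andP => [? ?]; lia.
  move: p; apply: in_cat_all => p; first by move/rS/andP => [? ?]; lia.
  by move: p; apply: in_cat_all => p; [move/rI2/andP => [? ?]|move/rI3]; lia.
Qed.

Lemma memL p : (p \in setA sy t) = (p \in cI1 sy t ++ cTp sy t ++ cS sy t ++ cI2 sy t ++ cI3 sy t).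
Proof.
rewrite setA_split.
rewrite (mem_cat p (cI1 sy t)) (mem_cat p (cI2 sy t)) (mem_cat p (cI3 sy t)) (mem_cat p (cT sy t)).
rewrite (mem_cat p (cI1 sy t)) (mem_cat p (cTp sy t)) (mem_cat p (cS sy t)) (mem_cat p (cI2 sy t)).
have h1 := @cT_char p; have h2 := @cTp_sub p.
move: h1 h2.
case: (p \in cT sy t); case: (p \in cI1 sy t); case: (p \in cTp sy t);
  case: (p \in cS sy t); case: (p \in cI2 sy t); case: (p \in cI3 sy t) => //=;
  move=> h1 h2; first [by have [] := h1 | by have := h2 isT].
Qed.

Lemma sizeL : size (cI1 sy t ++ cTp sy t ++ cS sy t ++ cI2 sy t ++ cI3 sy t)
  = (8 * sy + 7) * t + (3 * sy + 1).
Proof.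
have s1 : size (cI1 sy t) = t.+1 * sy.+1 by rewrite /cI1 size_prodl !size_intv !subn0.
have s2 : size (cI2 sy t) = t.+1 * sy.+1.
  by rewrite /cI2 size_prodl !size_intv subn0 addKn.
have s3 : size (cI3 sy t) = t.+1 * sy.+1.
  by rewrite /cI3 size_prodl !size_intv subn0 addKn.
have sT : size (cTp sy t) = a * t - 2 by rewrite /cTp size_map size_iota.
have sS : size (cS sy t) = t * sy.+1.
  rewrite /cS size_prodl size_aprog size_intv subn0 eA1.
  rewrite (_ : A + t ^ 2 - 1 - A = (t - 1) * t.+1); last first.
    rewrite mulnBl mul1n mulnS -mulnn; lia.
  rewrite mulnK //; congr muln; lia.
rewrite (size_cat (cI1 sy t)) (size_cat (cTp sy t)) (size_cat (cS sy t)) (size_cat (cI2 sy t)).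
rewrite s1 s2 s3 sT sS.
nia.
Qed.

End Count.

Theorem mainTheorem13 (sy t : nat) (ht : 1 <= t) :
  size (undup (setA sy t)) = (8 * sy + 7) * t + (3 * sy + 1) /\
  (forall x y : nat, x <= (16 * sy + 14) * t ^ 2 - 1 -> y <= sy ->
     in_sumset (setA sy t) (x, y)).
Proof.
split; last first.
  move=> x y hx hy.
  have e2 : 2 * (4 * sy + 3) * t ^ 2 = 2 * ((4 * sy + 3) * t ^ 2) by rewrite mulnA.
  have e3 : (3 * (4 * sy + 3) + 1) * t ^ 2 = 3 * ((4 * sy + 3) * t ^ 2) + t ^ 2
    by rewrite mulnDl mul1n mulnA.
  have e4 : (16 * sy + 14) * t ^ 2 = 4 * ((4 * sy + 3) * t ^ 2) + 2 * t ^ 2.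
    by rewrite mulnA -mulnDl; congr muln; lia.
  have eA : (4 * sy + 3) * t ^ 2 = 4 * (sy * t ^ 2) + 3 * t ^ 2
    by rewrite mulnDl mulnA.
  have hQ : 1 <= t ^ 2 by rewrite expn_gt0; lia.
  set A := (4 * sy + 3) * t ^ 2 in e2 e3 e4 eA.
  set Q := t ^ 2 in e2 e3 e4 eA hQ.
  rewrite e4 in hx.
  have hI1 : forall r y, r <= t -> y <= sy -> (0 + r, y) \in setA sy t.
    by move=> r z; rewrite add0n; apply: mI1.
  have hI2 := @mI2 sy t ht; rewrite e2 in hI2.
  have hI3 := @mI3 sy t ht; rewrite e3 in hI3.
  case: (ltnP x A) => h1.
    by apply: (@sumT sy t ht 0 x y x hI1 h1 hy); rewrite add0n.
  case: (ltnP x (A + Q)) => h2.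
    by apply: (@sumS sy t ht 0 (x - A) y x hI1) => //; lia.
  case: (ltnP x (2 * A)) => h3.
    by apply: (@sumC3 sy t ht) => //; rewrite e2.
  case: (ltnP x (3 * A)) => h4.
    by apply: (@sumT sy t ht _ (x - 2 * A) y x hI2) => //; lia.
  case: (ltnP x (3 * A + Q)) => h5.
    by apply: (@sumS sy t ht _ (x - 3 * A) y x hI2) => //; lia.
  case: (ltnP x (4 * A + Q)) => h6.
    by apply: (@sumT sy t ht _ (x - (3 * A + Q)) y x hI3) => //; lia.
  by apply: (@sumS sy t ht _ (x - (4 * A + Q)) y x hI3) => //; lia.
have hp : perm_eq (undup (setA sy t)) (cI1 sy t ++ cTp sy t ++ cS sy t ++ cI2 sy t ++ cI3 sy t).
  apply: uniq_perm; [exact: undup_uniq | exact: uniqL | ].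
  by move=> p; rewrite mem_undup memL.
by rewrite (perm_size hp) sizeL.
Qed.
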